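(* Let $\Phi(r)=U'(r)/(1+U(r))$ for $r\ge0$. There exist positive numbers $T_-<T_+$ and $\Phi_0$ such that $\Phi$ is an increasing diffeomorphism from $(0,T_-)$ onto $(0,\Phi_0)$, a decreasing diffeomorphism from $(T_+,\infty)$ onto $(0,\Phi_0)$, and $\Phi^{-1}((0,\Phi_0))=(0,T_-)\cup(T_+,\infty)$. Moreover $\Phi(r)\sim\frac{2r}{15\pi}$ as $r\to0$ and $\Phi(r)\sim\frac{1}{r\log r}$ as $r\to\infty$.
   Context: $U(r)=\frac{r^2}{4\pi}\int_0^1\frac{z^2-z^4/3}{1+r^2(1-z^2)/4}dz$ for $r\ge0$. *)

(* Defs.v *)
From Stdlib Require Import Reals Lra ClassicalEpsilon.
Open Scope R_scope.

(* Riemann integral of f over [a,b]: the (unique, by RiemannInt_P5) value of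
   RiemannInt pr for any integrability proof pr; an arbitrary value if f is not
   Riemann integrable (never the case below). *)
Definition Rint (f : R -> R) (a b : R) : R :=
  epsilon (inhabits 0)
    (fun I => exists pr : Riemann_integrable f a b, RiemannInt pr = I).

Definition U_integrand (r z : R) : R :=
  (z ^ 2 - z ^ 4 / 3) / (1 + r ^ 2 * (1 - z ^ 2) / 4).

Definition U (r : R) : R := r ^ 2 / (4 * PI) * Rint (U_integrand r) 0 1.

Definition U' (r : R) : R :=
  epsilon (inhabits 0) (fun l => derivable_pt_lim U r l).

Definition Phi (r : R) : R := U' r / (1 + U r).

Definition C1_on (I : R -> Prop) (f : R -> R) : Prop :=
  exists f' : R -> R, forall x, I x -> derivable_pt_lim f x (f' x) /\ continuity_pt f' x.

Definition diffeo_onto (I J : R -> Prop) (f : R -> R) : Prop :=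
  exists g : R -> R,
    (forall x, I x -> J (f x) /\ g (f x) = x) /\
    (forall y, J y -> I (g y) /\ f (g y) = y) /\
    C1_on I f /\ C1_on J g.

Definition strictly_increasing_on (I : R -> Prop) (f : R -> R) : Prop :=
  forall x y, I x -> I y -> x < y -> f x < f y.

Definition strictly_decreasing_on (I : R -> Prop) (f : R -> R) : Prop :=
  forall x y, I x -> I y -> x < y -> f y < f x.

(* Main.v *)
Require Import Defs.
From Stdlib Require Import Reals Psatz Lra ClassicalEpsilon FunctionalExtensionality.
Open Scope R_scope.

Lemma Rint_eq f a b (pr : Riemann_integrable f a b) : Rint f a b = RiemannInt pr.
Proof.
  unfold Rint.
  destruct (epsilon_spec (inhabits 0) (fun I => exists pr : Riemann_integrable f a b, RiemannInt pr = I)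
     (ex_intro _ _ (ex_intro _ pr eq_refl))) as [pr' H].
  rewrite <- H. apply RiemannInt_P5.
Qed.

Definition cont01 (f : R -> R) := forall z, 0 <= z <= 1 -> continuity_pt f z.

Lemma int01 f : cont01 f -> Riemann_integrable f 0 1.
Proof. intro H. apply continuity_implies_RiemannInt; [lra| exact H]. Qed.

Lemma cont01_lin f g l : cont01 f -> cont01 g -> cont01 (fun x => f x + l * g x).
Proof.
  intros Hf Hg z Hz.
  apply (continuity_pt_plus f (fun x => l * g x)); [apply Hf, Hz|].
  apply (continuity_pt_scal g l); apply Hg, Hz.
Qed.

Lemma cont01_scal f l : cont01 f -> cont01 (fun x => l * f x).
Proof. intros Hf z Hz. apply (continuity_pt_scal f l); apply Hf, Hz. Qed.

Lemma Rint_lin f g l : cont01 f -> cont01 g ->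
  Rint (fun x => f x + l * g x) 0 1 = Rint f 0 1 + l * Rint g 0 1.
Proof.
  intros Hf Hg.
  rewrite (Rint_eq _ _ _ (int01 _ Hf)), (Rint_eq _ _ _ (int01 _ Hg)),
    (Rint_eq _ _ _ (int01 _ (cont01_lin f g l Hf Hg))).
  apply RiemannInt_P13.
Qed.

Lemma Rint_ext f g : cont01 f -> (forall x, 0 <= x <= 1 -> f x = g x) ->
  Rint f 0 1 = Rint g 0 1.
Proof.
  intros Hf E.
  assert (pg : Riemann_integrable g 0 1).
  { refine (@Riemann_integrable_ext f g 0 1 _ (int01 _ Hf)).
    intros x Hx. rewrite Rmin_left, Rmax_right in Hx by lra. apply E; lra. }
  rewrite (Rint_eq _ _ _ (int01 _ Hf)), (Rint_eq _ _ _ pg).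
  apply RiemannInt_P18; [lra|]. intros; apply E; lra.
Qed.

Lemma cont01_ext f g : cont01 f -> (forall x, f x = g x) -> cont01 g.
Proof.
  intros Hf E z Hz. assert (f = g) as <- by (apply functional_extensionality; exact E).
  apply Hf, Hz.
Qed.

Lemma Rint_const c : Rint (fun _ => c) 0 1 = c.
Proof.
  assert (pr : Riemann_integrable (fct_cte c) 0 1).
  { apply int01. intros z _. apply continuity_pt_const. intros a b; reflexivity. }
  change (fun _ : R => c) with (fct_cte c).
  rewrite (Rint_eq _ _ _ pr), RiemannInt_P15. ring.
Qed.

Lemma Rint_scal f k : cont01 f -> Rint (fun x => k * f x) 0 1 = k * Rint f 0 1.
Proof.
  intro Hf.
  assert (Hc : cont01 (fun _ => 0)).
  { intros z _. apply continuity_pt_const. intros a b; reflexivity. }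
  rewrite <- (Rint_ext (fun x => 0 + k * f x)).
  - rewrite Rint_lin, Rint_const; auto. ring.
  - apply cont01_lin; auto.
  - intros; ring.
Qed.

Lemma Rint_bound f M : cont01 f -> (forall z, 0 <= z <= 1 -> Rabs (f z) <= M) ->
  Rabs (Rint f 0 1) <= M.
Proof.
  intros Hf HM.
  pose proof (int01 _ Hf) as pr.
  pose proof (@RiemannInt_P16 f 0 1 pr) as pra.
  rewrite (Rint_eq _ _ _ pr).
  eapply Rle_trans. apply (@RiemannInt_P17 f 0 1 pr pra); lra.
  destruct (@RiemannInt_const_bound _ 0 1 (-M) M pra) as [_ H2]; [lra| |].
  - intros x Hx. pose proof (HM x ltac:(lra)). pose proof (Rabs_pos (f x)). split; lra.
  - lra.
Qed.

Lemma Rint_le f g : cont01 f -> cont01 g -> (forall z, 0 <= z <= 1 -> f z <= g z) ->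
  Rint f 0 1 <= Rint g 0 1.
Proof.
  intros Hf Hg H.
  rewrite (Rint_eq _ _ _ (int01 _ Hf)), (Rint_eq _ _ _ (int01 _ Hg)).
  apply RiemannInt_P19; [lra|]. intros; apply H; lra.
Qed.

Lemma Rint_FTC f F : cont01 f -> (forall x, 0 <= x <= 1 -> derivable_pt_lim F x (f x)) ->
  Rint f 0 1 = F 1 - F 0.
Proof.
  intros Hf HF.
  assert (h : 0 <= 1) by lra.
  pose proof (@RiemannInt_P29 f 0 1 h Hf) as Hp.
  assert (HA : antiderivative f F 0 1).
  { split; [|exact h]. intros x Hx. exists (exist _ (f x) (HF x Hx)). reflexivity. }
  destruct (@antiderivative_Ucte f _ _ 0 1 HA Hp) as [c Hc].
  rewrite (Rint_eq _ _ _ (int01 _ Hf)).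
  rewrite (RiemannInt_P20 h (FTC_P1 h Hf)).
  rewrite (Hc 1), (Hc 0) by lra. ring.
Qed.

Lemma Rabs_le_inv x b : Rabs x <= b -> -b <= x <= b.
Proof. unfold Rabs; destruct (Rcase_abs x); lra. Qed.
Lemma Rabs_lt_inv x b : Rabs x < b -> -b < x < b.
Proof. unfold Rabs; destruct (Rcase_abs x); lra. Qed.

Lemma Lip_from_deriv (f f' : R -> R) (r0 R0 K : R) :
  (forall r, Rabs (r - r0) <= R0 -> derivable_pt_lim f r (f' r)) ->
  (forall r, Rabs (r - r0) <= R0 -> Rabs (f' r) <= K) ->
  forall r, Rabs (r - r0) <= R0 -> Rabs (f r - f r0) <= K * Rabs (r - r0).
Proof.
  intros Hd HK r Hr.
  destruct (MVT_abs f f' r0 r) as [c [Hc Hcr]].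
  - intros c Hc. apply Hd.
    unfold Rmin, Rmax in Hc; destruct (Rle_dec r0 r);
    apply Rabs_le; apply Rabs_le_inv in Hr; lra.
  - rewrite Hc. apply Rmult_le_compat_r; [apply Rabs_pos|]. apply HK.
    unfold Rmin, Rmax in Hcr; destruct (Rle_dec r0 r);
    apply Rabs_le; apply Rabs_le_inv in Hr; lra.
Qed.

Lemma Taylor2 (f f' : R -> R) (r0 K : R) :
  (forall r, Rabs (r - r0) <= 1 -> derivable_pt_lim f r (f' r)) ->
  (forall r, Rabs (r - r0) <= 1 -> Rabs (f' r - f' r0) <= K * Rabs (r - r0)) ->
  0 <= K ->
  forall r, Rabs (r - r0) <= 1 ->
    Rabs (f r - f r0 - (r - r0) * f' r0) <= K * (r - r0) ^ 2.
Proof.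
  intros Hd HK K0 r Hr.
  destruct (MVT_abs (fun t => f t - t * f' r0) (fun t => f' t - f' r0) r0 r) as [c [Hc Hcr]].
  - intros c Hc. replace (f' c - f' r0) with (f' c - 1 * f' r0) by ring.
    apply derivable_pt_lim_minus.
    + apply Hd. unfold Rmin, Rmax in Hc; destruct (Rle_dec r0 r);
      apply Rabs_le; apply Rabs_le_inv in Hr; lra.
    + pose proof (derivable_pt_lim_scal_right id c 1 (f' r0) (derivable_pt_lim_id c)) as X.
      exact X.
  - assert (Hc' : Rabs (c - r0) <= Rabs (r - r0)).
    { unfold Rmin, Rmax in Hcr; destruct (Rle_dec r0 r);
      [rewrite !Rabs_right by lra| rewrite !Rabs_left1 by lra]; lra. }
    replace (f r - f r0 - (r - r0) * f' r0) with
      ((f r - r * f' r0) - (f r0 - r0 * f' r0)) by ring.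
    rewrite Hc.
    assert (Rabs (f' c - f' r0) <= K * Rabs (r - r0)).
    { eapply Rle_trans. apply HK. lra.
      apply Rmult_le_compat_l; lra. }
    replace ((r - r0) ^ 2) with (Rabs (r - r0) * Rabs (r - r0)).
    + rewrite <- Rmult_assoc. apply Rmult_le_compat_r; [apply Rabs_pos| lra].
    + rewrite <- Rabs_mult. rewrite Rabs_right; [ring|]. apply Rle_ge; apply Rle_0_sqr.
Qed.

Lemma DUI (F F' : R -> R -> R) (r0 K : R) :
  (forall r, cont01 (F r)) -> (forall r, cont01 (F' r)) ->
  (forall z, 0 <= z <= 1 -> forall r, derivable_pt_lim (fun t => F t z) r (F' r z)) ->
  (forall z, 0 <= z <= 1 -> forall r, Rabs (r - r0) <= 1 ->
     Rabs (F' r z - F' r0 z) <= K * Rabs (r - r0)) ->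
  0 <= K ->
  derivable_pt_lim (fun r => Rint (F r) 0 1) r0 (Rint (F' r0) 0 1).
Proof.
  intros HF HF' Hd HL K0 eps Heps.
  assert (Hd0 : 0 < Rmin 1 (eps / (K + 1))).
  { apply Rmin_glb_lt; [lra|]. apply Rdiv_lt_0_compat; lra. }
  exists (mkposreal _ Hd0). intros h Hh0 Hh. simpl in Hh.
  assert (Hh1 : Rabs h <= 1) by (pose proof (Rmin_l 1 (eps/(K+1))); lra).
  assert (Hh2 : Rabs h < eps / (K+1)) by (pose proof (Rmin_r 1 (eps/(K+1))); lra).
  set (g := fun z => (F (r0 + h) z + (-1) * F r0 z) + (- h) * F' r0 z).
  assert (Hg : Rint g 0 1 = Rint (F (r0+h)) 0 1 - Rint (F r0) 0 1 - h * Rint (F' r0) 0 1).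
  { unfold g. rewrite Rint_lin, Rint_lin; auto.
    - ring.
    - apply cont01_lin; auto. }
  assert (Hb : Rabs (Rint g 0 1) <= K * h ^ 2).
  { apply Rint_bound.
    - unfold g. apply cont01_lin; auto. apply cont01_lin; auto.
    - intros z Hz. unfold g.
      pose proof (Taylor2 (fun t => F t z) (fun t => F' t z) r0 K) as T.
      replace (F (r0 + h) z + -1 * F r0 z + - h * F' r0 z) with
        (F (r0 + h) z - F r0 z - (r0 + h - r0) * F' r0 z) by ring.
      replace (h ^ 2) with ((r0 + h - r0) ^ 2) by ring.
      apply (T (fun r _ => Hd z Hz r) (fun r Hr => HL z Hz r Hr) K0).
      replace (r0 + h - r0) with h by ring. exact Hh1. }
  replace ((Rint (F (r0 + h)) 0 1 - Rint (F r0) 0 1) / h - Rint (F' r0) 0 1)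
    with (Rint g 0 1 / h) by (rewrite Hg; field; auto).
  unfold Rdiv. rewrite Rabs_mult, Rabs_inv.
  assert (Habs : 0 < Rabs h) by (apply Rabs_pos_lt; auto).
  apply Rle_lt_trans with (K * h ^ 2 * / Rabs h).
  - apply Rmult_le_compat_r; [left; apply Rinv_0_lt_compat; auto| auto].
  - replace (K * h ^ 2 * / Rabs h) with (K * Rabs h).
    + apply Rle_lt_trans with (K * (eps / (K + 1))).
      * apply Rmult_le_compat_l; lra.
      * unfold Rdiv. rewrite <- Rmult_assoc.
        apply Rmult_lt_reg_r with (K + 1); [lra|].
        rewrite Rmult_assoc, Rinv_l by lra. nra.
    + replace (h ^ 2) with (Rabs h * Rabs h).
      * field; lra.
      * rewrite <- Rabs_mult. rewrite Rabs_right; [ring| apply Rle_ge; apply Rle_0_sqr].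
Qed.

Lemma Rint_cont (F : R -> R -> R) (r0 K : R) :
  (forall r, cont01 (F r)) ->
  (forall z, 0 <= z <= 1 -> forall r, Rabs (r - r0) <= 1 ->
     Rabs (F r z - F r0 z) <= K * Rabs (r - r0)) ->
  0 <= K ->
  continuity_pt (fun r => Rint (F r) 0 1) r0.
Proof.
  intros HF HL K0 eps Heps.
  exists (Rmin 1 (eps / (K + 1))). split.
  { apply Rmin_glb_lt; [lra|]. apply Rdiv_lt_0_compat; lra. }
  intros x [_ Hx]. simpl in *. unfold Rdist in *.
  assert (Hh1 : Rabs (x - r0) <= 1) by (pose proof (Rmin_l 1 (eps/(K+1))); lra).
  assert (Hh2 : Rabs (x - r0) < eps / (K+1)) by (pose proof (Rmin_r 1 (eps/(K+1))); lra).
  replace (Rint (F x) 0 1 - Rint (F r0) 0 1) with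
    (Rint (fun z => F x z + (-1) * F r0 z) 0 1) by (rewrite Rint_lin; auto; ring).
  apply Rle_lt_trans with (K * Rabs (x - r0)).
  - apply Rint_bound. apply cont01_lin; auto.
    intros z Hz. replace (F x z + -1 * F r0 z) with (F x z - F r0 z) by ring. apply HL; auto.
  - apply Rle_lt_trans with (K * (eps / (K + 1))).
    + apply Rmult_le_compat_l; lra.
    + unfold Rdiv. rewrite <- Rmult_assoc.
      apply Rmult_lt_reg_r with (K + 1); [lra|].
      rewrite Rmult_assoc, Rinv_l by lra. nra.
Qed.

Lemma dlim_l f x l l' : derivable_pt_lim f x l -> l = l' -> derivable_pt_lim f x l'.
Proof. intros H <-; exact H. Qed.

Lemma dlim_ext f g x l : (forall y, f y = g y) -> derivable_pt_lim f x l -> derivable_pt_lim g x l.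
Proof. intros E H. assert (f = g) as <- by (apply functional_extensionality; exact E). exact H. Qed.

Lemma d_plus f g x l1 l2 : derivable_pt_lim f x l1 -> derivable_pt_lim g x l2 ->
  derivable_pt_lim (fun y => f y + g y) x (l1 + l2).
Proof. apply derivable_pt_lim_plus. Qed.
Lemma d_minus f g x l1 l2 : derivable_pt_lim f x l1 -> derivable_pt_lim g x l2 ->
  derivable_pt_lim (fun y => f y - g y) x (l1 - l2).
Proof. apply derivable_pt_lim_minus. Qed.
Lemma d_mult f g x l1 l2 : derivable_pt_lim f x l1 -> derivable_pt_lim g x l2 ->
  derivable_pt_lim (fun y => f y * g y) x (l1 * g x + f x * l2).
Proof. apply derivable_pt_lim_mult. Qed.
Lemma d_opp f x l : derivable_pt_lim f x l -> derivable_pt_lim (fun y => - f y) x (- l).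
Proof. apply derivable_pt_lim_opp. Qed.
Lemma d_div f g x l1 l2 : derivable_pt_lim f x l1 -> derivable_pt_lim g x l2 -> g x <> 0 ->
  derivable_pt_lim (fun y => f y / g y) x ((l1 * g x - l2 * f x) / (g x) ^ 2).
Proof.
  intros H H0 H1. pose proof (derivable_pt_lim_div f g x l1 l2 H H0 H1) as X.
  unfold div_fct, Rsqr in X. replace ((g x)^2) with (g x * g x) by ring. exact X.
Qed.
Lemma d_pow f x l n : derivable_pt_lim f x l ->
  derivable_pt_lim (fun y => f y ^ n) x (INR n * f x ^ (pred n) * l).
Proof.
  intros H. pose proof (derivable_pt_lim_comp f (fun y => y ^ n) x l _ H (derivable_pt_lim_pow (f x) n)) as X.
  unfold comp in X. eapply dlim_l; [exact X| ring].
Qed.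
Lemma d_const c x : derivable_pt_lim (fun _ => c) x 0.
Proof. apply derivable_pt_lim_const. Qed.
Lemma d_id x : derivable_pt_lim (fun y => y) x 1.
Proof. apply derivable_pt_lim_id. Qed.
Lemma d_inv f x l : derivable_pt_lim f x l -> f x <> 0 ->
  derivable_pt_lim (fun y => / f y) x (- l / (f x) ^ 2).
Proof.
  intros H H0. eapply dlim_ext with (f := fun y => 1 / f y).
  { intros; unfold Rdiv; ring. }
  eapply dlim_l. apply d_div; [apply d_const| exact H| exact H0]. cbv beta. field; auto.
Qed.

Ltac dauto :=
  match goal with
  | |- derivable_pt_lim (fun _ => ?c) _ _ => apply d_const
  | |- derivable_pt_lim (fun y => y) _ _ => apply d_id
  | |- derivable_pt_lim (fun y => @?f y + @?g y) _ _ => apply (d_plus f g); dauto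
  | |- derivable_pt_lim (fun y => @?f y - @?g y) _ _ => apply (d_minus f g); dauto
  | |- derivable_pt_lim (fun y => @?f y * @?g y) _ _ => apply (d_mult f g); dauto
  | |- derivable_pt_lim (fun y => - @?f y) _ _ => apply (d_opp f); dauto
  | |- derivable_pt_lim (fun y => @?f y / @?g y) _ _ => apply (d_div f g); [dauto|dauto|]
  | |- derivable_pt_lim (fun y => / @?f y) _ _ => apply (d_inv f); [dauto|]
  | |- derivable_pt_lim (fun y => @?f y ^ ?n) _ _ => apply (d_pow f); dauto
  | _ => idtac
  end.
Ltac nz := cbv beta; let Hc := fresh in intro Hc; try lra; try nra.

Definition g0 a b r := a * r ^ 2 / (1 + b * r ^ 2).
Definition g1 a b r := 2 * a * r / (1 + b * r ^ 2) ^ 2.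
Definition g2 a b r := 2 * a * (1 - 3 * b * r ^ 2) / (1 + b * r ^ 2) ^ 3.
Definition g3 a b r := -24 * a * b * r * (1 - b * r ^ 2) / (1 + b * r ^ 2) ^ 4.

Lemma Dpos b r : 0 <= b -> 0 < 1 + b * r ^ 2.
Proof. intros; pose proof (pow2_ge_0 r); nra. Qed.

Lemma dg0 a b r : 0 <= b -> derivable_pt_lim (g0 a b) r (g1 a b r).
Proof.
  intro Hb. pose proof (Dpos b r Hb). unfold g0, g1.
  eapply dlim_l. dauto. nz. cbv beta. simpl. field. lra.
Qed.

Lemma dg1 a b r : 0 <= b -> derivable_pt_lim (g1 a b) r (g2 a b r).
Proof.
  intro Hb. pose proof (Dpos b r Hb). unfold g1, g2.
  eapply dlim_l. dauto. nz. cbv beta. simpl. field. lra.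
Qed.

Lemma dg2 a b r : 0 <= b -> derivable_pt_lim (g2 a b) r (g3 a b r).
Proof.
  intro Hb. pose proof (Dpos b r Hb). unfold g2, g3.
  eapply dlim_l. dauto. nz. cbv beta. simpl. field. lra.
Qed.

Lemma abs_div_le X Y B : Rabs X <= B -> 1 <= Y -> Rabs (X / Y) <= B.
Proof.
  intros H1 H2. unfold Rdiv. rewrite Rabs_mult, Rabs_inv, (Rabs_right Y) by lra.
  pose proof (Rabs_pos X).
  apply Rle_trans with (Rabs X * 1); [|lra].
  apply Rmult_le_compat_l; auto.
  rewrite <- Rinv_1. apply Rinv_le_contravar; lra.
Qed.

Lemma bound_g2 a b r : 0 <= a <= 1 -> 0 <= b <= 1/4 -> Rabs (g2 a b r) <= 2 * (1 + r ^ 2).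
Proof.
  intros Ha Hb. unfold g2. pose proof (pow2_ge_0 r).
  apply abs_div_le.
  - assert (0 <= b*r^2 <= r^2/4) by nra.
    assert (0 <= a*(b*r^2) <= b*r^2) by nra.
    apply Rabs_le. split; nra.
  - assert (1 <= 1 + b * r ^ 2) by nra.
    replace ((1 + b * r ^ 2) ^ 3) with ((1 + b * r ^ 2) * ((1 + b * r ^ 2) * (1 + b * r ^ 2))) by ring.
    nra.
Qed.

Lemma bound_g3 a b r : 0 <= a <= 1 -> 0 <= b <= 1/4 -> Rabs (g3 a b r) <= 3 * (1 + r ^ 2) ^ 2.
Proof.
  intros Ha Hb. unfold g3. pose proof (pow2_ge_0 r).
  apply abs_div_le.
  - rewrite Rabs_mult, Rabs_mult, Rabs_mult, Rabs_mult.
    rewrite (Rabs_left (-24)) by lra.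
    rewrite (Rabs_right a), (Rabs_right b) by lra.
    assert (Hr : Rabs r <= (1 + r ^ 2) / 2).
    { pose proof (pow2_ge_0 (r-1)); pose proof (pow2_ge_0 (r+1)). apply Rabs_le. split; nra. }
    assert (H1 : Rabs (1 - b * r ^ 2) <= 1 + r ^ 2).
    { apply Rabs_le. split; nra. }
    pose proof (Rabs_pos r). pose proof (Rabs_pos (1 - b * r ^ 2)).
    assert (- -24 * a * b <= 6) by nra.
    assert (0 <= - -24 * a * b) by nra.
    apply Rle_trans with (6 * ((1 + r ^ 2) / 2) * (1 + r ^ 2)).
    + apply Rmult_le_compat; try nra.
    + nra.
  - assert (1 <= 1 + b * r ^ 2) by nra.
    assert (1 <= (1 + b * r ^ 2) ^ 2) by nra.
    replace ((1 + b * r ^ 2) ^ 4) with ((1 + b * r ^ 2) ^ 2 * (1 + b * r ^ 2) ^ 2) by ring.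
    nra.
Qed.

Definition Nz z := z ^ 2 - z ^ 4 / 3.
Definition bz z := (1 - z ^ 2) / 4.
Definition F0 r z := g0 (Nz z) (bz z) r.
Definition F1 r z := g1 (Nz z) (bz z) r.
Definition F2 r z := g2 (Nz z) (bz z) r.
Definition F3 r z := g3 (Nz z) (bz z) r.

Lemma Nz_b z : 0 <= z <= 1 -> 0 <= Nz z <= 1.
Proof. intros. unfold Nz. assert (0 <= z^2 <= 1) by nra. split; nra. Qed.
Lemma bz_b z : 0 <= z <= 1 -> 0 <= bz z <= 1/4.
Proof. intros. unfold bz. assert (0 <= z^2 <= 1) by nra. split; lra. Qed.

Ltac cont_tac r :=
  let z := fresh "z" in let Hz := fresh "Hz" in
  intros z Hz;
  let H1 := fresh in let H3 := fresh in
  assert (H1 : 0 <= z^2 <= 1) by nra;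
  assert (H3 : 0 <= (1 - z^2) * r^2) by (apply Rmult_le_pos; [lra| apply pow2_ge_0]);
  unfold F0, F1, F2, F3, g0, g1, g2, g3, Nz, bz; reg;
  try apply pow_nonzero; let H2 := fresh in intro H2; nra.

Lemma cF0 r : cont01 (F0 r). Proof. cont_tac r. Qed.
Lemma cF1 r : cont01 (F1 r). Proof. cont_tac r. Qed.
Lemma cF2 r : cont01 (F2 r). Proof. cont_tac r. Qed.
Lemma cF3 r : cont01 (F3 r). Proof. cont_tac r. Qed.

Lemma sq_le_nb r r0 : Rabs (r - r0) <= 1 -> 1 + r ^ 2 <= 1 + (Rabs r0 + 1) ^ 2.
Proof.
  intro H. apply Rabs_le_inv in H.
  assert (Rabs r <= Rabs r0 + 1).
  { pose proof (Rabs_triang (r - r0) r0). replace (r - r0 + r0) with r in H0 by ring.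
    apply Rabs_le in H. lra. }
  rewrite <- (pow2_abs r). pose proof (Rabs_pos r). nra.
Qed.

Lemma LipF1 r0 : forall z, 0 <= z <= 1 -> forall r, Rabs (r - r0) <= 1 ->
  Rabs (F1 r z - F1 r0 z) <= 2 * (1 + (Rabs r0 + 1) ^ 2) * Rabs (r - r0).
Proof.
  intros z Hz r Hr.
  apply (Lip_from_deriv (fun t => F1 t z) (fun t => F2 t z) r0 1); auto.
  - intros; apply dg1. apply bz_b; auto.
  - intros t Ht. eapply Rle_trans. apply bound_g2; [apply Nz_b| apply bz_b]; auto.
    pose proof (sq_le_nb t r0 Ht). lra.
Qed.

Lemma LipF2 r0 : forall z, 0 <= z <= 1 -> forall r, Rabs (r - r0) <= 1 ->
  Rabs (F2 r z - F2 r0 z) <= 3 * (1 + (Rabs r0 + 1) ^ 2) ^ 2 * Rabs (r - r0).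
Proof.
  intros z Hz r Hr.
  apply (Lip_from_deriv (fun t => F2 t z) (fun t => F3 t z) r0 1); auto.
  - intros; apply dg2. apply bz_b; auto.
  - intros t Ht. eapply Rle_trans. apply bound_g3; [apply Nz_b| apply bz_b]; auto.
    pose proof (sq_le_nb t r0 Ht). pose proof (pow2_ge_0 t).
    assert (1 + t^2 <= 1 + (Rabs r0 + 1) ^ 2) by exact H. nra.
Qed.

Definition A0 r := Rint (F0 r) 0 1.
Definition A1 r := Rint (F1 r) 0 1.
Definition A2 r := Rint (F2 r) 0 1.

Lemma dA0 r : derivable_pt_lim A0 r (A1 r).
Proof.
  apply (DUI F0 F1 r (2 * (1 + (Rabs r + 1) ^ 2))).
  - apply cF0. - apply cF1.
  - intros z Hz t. apply dg0. apply bz_b; auto.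
  - apply LipF1.
  - pose proof (pow2_ge_0 (Rabs r + 1)). lra.
Qed.

Lemma dA1 r : derivable_pt_lim A1 r (A2 r).
Proof.
  apply (DUI F1 F2 r (3 * (1 + (Rabs r + 1) ^ 2) ^ 2)).
  - apply cF1. - apply cF2.
  - intros z Hz t. apply dg1. apply bz_b; auto.
  - apply LipF2.
  - pose proof (pow2_ge_0 (1 + (Rabs r + 1) ^ 2)). lra.
Qed.

Lemma cA2 r : continuity_pt A2 r.
Proof.
  apply (Rint_cont F2 r (3 * (1 + (Rabs r + 1) ^ 2) ^ 2)).
  - apply cF2.
  - apply LipF2.
  - pose proof (pow2_ge_0 (1 + (Rabs r + 1) ^ 2)). lra.
Qed.

Lemma c_plus f g x : continuity_pt f x -> continuity_pt g x -> continuity_pt (fun y => f y + g y) x.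
Proof. apply continuity_pt_plus. Qed.
Lemma c_minus f g x : continuity_pt f x -> continuity_pt g x -> continuity_pt (fun y => f y - g y) x.
Proof. apply continuity_pt_minus. Qed.
Lemma c_mult f g x : continuity_pt f x -> continuity_pt g x -> continuity_pt (fun y => f y * g y) x.
Proof. apply continuity_pt_mult. Qed.
Lemma c_div f g x : continuity_pt f x -> continuity_pt g x -> g x <> 0 -> continuity_pt (fun y => f y / g y) x.
Proof. apply continuity_pt_div. Qed.
Lemma c_inv f x : continuity_pt f x -> f x <> 0 -> continuity_pt (fun y => / f y) x.
Proof. apply continuity_pt_inv. Qed.
Lemma c_const c x : continuity_pt (fun _ => c) x.
Proof. apply continuity_pt_const. intros a b; reflexivity. Qed.
Lemma c_id x : continuity_pt (fun y => y) x.
Proof. apply derivable_continuous_pt. exists 1. apply derivable_pt_lim_id. Qed.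
Lemma c_pow f x n : continuity_pt f x -> continuity_pt (fun y => f y ^ n) x.
Proof.
  intro H. apply (continuity_pt_comp f (fun y => y ^ n)); auto.
  apply derivable_continuous_pt. exists (INR n * (f x) ^ pred n). apply derivable_pt_lim_pow.
Qed.
Lemma c_comp f g x : continuity_pt f x -> continuity_pt g (f x) -> continuity_pt (fun y => g (f y)) x.
Proof. apply continuity_pt_comp. Qed.
Lemma d_cont f x l : derivable_pt_lim f x l -> continuity_pt f x.
Proof. intro H. apply derivable_continuous_pt. exists l. exact H. Qed.

Ltac cauto :=
  match goal with
  | |- continuity_pt (fun _ => ?c) _ => apply c_const
  | |- continuity_pt (fun y => y) _ => apply c_id
  | |- continuity_pt (fun y => @?f y + @?g y) _ => apply (c_plus f g); cauto
  | |- continuity_pt (fun y => @?f y - @?g y) _ => apply (c_minus f g); cauto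
  | |- continuity_pt (fun y => @?f y * @?g y) _ => apply (c_mult f g); cauto
  | |- continuity_pt (fun y => @?f y / @?g y) _ => apply (c_div f g); [cauto|cauto|]
  | |- continuity_pt (fun y => / @?f y) _ => apply (c_inv f); [cauto|]
  | |- continuity_pt (fun y => @?f y ^ ?n) _ => apply (c_pow f); cauto
  | _ => idtac
  end.

Definition cc := / (4 * PI).

Lemma cUi r : cont01 (U_integrand r).
Proof.
  intros z Hz.
  assert (0 <= z^2 <= 1) by nra.
  assert (0 <= r^2 * (1 - z^2)) by (apply Rmult_le_pos; [apply pow2_ge_0| lra]).
  unfold U_integrand. reg. intro; nra.
Qed.

Lemma F0_eq r z : 0 <= z <= 1 -> F0 r z = r ^ 2 * U_integrand r z.
Proof.
  intro Hz. assert (0 <= z^2 <= 1) by nra.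
  assert (0 <= r^2 * (1 - z^2)) by (apply Rmult_le_pos; [apply pow2_ge_0| lra]).
  unfold F0, g0, U_integrand, Nz, bz. field. repeat split; intro; nra.
Qed.

Lemma U_eq r : U r = cc * A0 r.
Proof.
  unfold U, A0, cc.
  rewrite (Rint_ext (F0 r) (fun z => r ^ 2 * U_integrand r z)); [| apply cF0| apply F0_eq].
  rewrite Rint_scal by apply cUi. field. pose proof PI_RGT_0. lra.
Qed.

Lemma U_fun : U = fun r => cc * A0 r.
Proof. apply functional_extensionality; apply U_eq. Qed.

Lemma dU r : derivable_pt_lim U r (cc * A1 r).
Proof.
  rewrite U_fun. pose proof (dA0 r).
  eapply dlim_l. apply (d_mult (fun _ => cc) A0). apply d_const. exact H. ring.
Qed.

Lemma U'_eq r : U' r = cc * A1 r.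
Proof.
  unfold U'.
  pose proof (epsilon_spec (inhabits 0) (fun l => derivable_pt_lim U r l) (ex_intro _ _ (dU r))) as H0.
  eapply uniqueness_limite; [exact H0| apply dU].
Qed.

Lemma cc_pos : 0 < cc.
Proof. unfold cc. apply Rinv_0_lt_compat. pose proof PI_RGT_0. lra. Qed.

Lemma F0_nonneg r z : 0 <= z <= 1 -> 0 <= F0 r z.
Proof.
  intro Hz. pose proof (Nz_b z Hz). pose proof (bz_b z Hz).
  unfold F0, g0. pose proof (Dpos (bz z) r ltac:(lra)). pose proof (pow2_ge_0 r).
  unfold Rdiv. apply Rmult_le_pos. nra. left; apply Rinv_0_lt_compat; lra.
Qed.

Lemma A0_nonneg r : 0 <= A0 r.
Proof.
  unfold A0. apply Rle_trans with (Rint (fun _ => 0) 0 1); [rewrite Rint_const; lra|].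
  apply Rint_le; [intros z _; apply c_const| apply cF0| apply F0_nonneg].
Qed.

Lemma den_pos r : 0 < 1 + cc * A0 r.
Proof. pose proof cc_pos. pose proof (A0_nonneg r). nra. Qed.

Lemma Phi_eq r : Phi r = cc * A1 r / (1 + cc * A0 r).
Proof. unfold Phi. rewrite U'_eq, U_eq. reflexivity. Qed.

Lemma Phi_fun : Phi = fun r => cc * A1 r / (1 + cc * A0 r).
Proof. apply functional_extensionality; apply Phi_eq. Qed.

Definition dPhi r := (cc * A2 r * (1 + cc * A0 r) - cc * A1 r * (cc * A1 r)) / (1 + cc * A0 r) ^ 2.

Lemma dPhi_lim r : derivable_pt_lim Phi r (dPhi r).
Proof.
  rewrite Phi_fun. pose proof (dA0 r). pose proof (dA1 r). pose proof (den_pos r).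
  eapply dlim_l.
  - apply (d_div (fun r => cc * A1 r) (fun r => 1 + cc * A0 r)).
    + apply (d_mult (fun _ => cc) A1). apply d_const. exact H0.
    + apply (d_plus (fun _ => 1) (fun r => cc * A0 r)). apply d_const.
      apply (d_mult (fun _ => cc) A0). apply d_const. exact H.
    + cbv beta. lra.
  - unfold dPhi. cbv beta. field. lra.
Qed.

Lemma cA0 r : continuity_pt A0 r.
Proof. eapply d_cont. apply dA0. Qed.
Lemma cA1 r : continuity_pt A1 r.
Proof. eapply d_cont. apply dA1. Qed.

Lemma cdPhi r : continuity_pt dPhi r.
Proof.
  pose proof (cA0 r). pose proof (cA1 r). pose proof (cA2 r). pose proof (den_pos r).
  unfold dPhi. cauto; try assumption. cbv beta. apply pow_nonzero. lra.
Qed.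

Lemma cPhi r : continuity_pt Phi r.
Proof. eapply d_cont. apply dPhi_lim. Qed.

Lemma cNz : cont01 Nz.
Proof. intros z Hz. unfold Nz. reg. Qed.

Lemma Int_N : Rint Nz 0 1 = 4 / 15.
Proof.
  rewrite (Rint_FTC Nz (fun z => z ^ 3 / 3 - z ^ 5 / 15)).
  - field.
  - apply cNz.
  - intros x _. eapply dlim_l; [dauto; nz|]. unfold Nz. cbv beta. simpl. field.
Qed.

Lemma A0_0 : A0 0 = 0.
Proof.
  unfold A0. rewrite (Rint_ext (F0 0) (fun _ => 0)); [apply Rint_const| apply cF0|].
  intros; unfold F0, g0. simpl. field; lra.
Qed.

Lemma A1_0 : A1 0 = 0.
Proof.
  unfold A1. rewrite (Rint_ext (F1 0) (fun _ => 0)); [apply Rint_const| apply cF1|].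
  intros; unfold F1, g1. simpl. field; lra.
Qed.

Lemma A2_0 : A2 0 = 8 / 15.
Proof.
  unfold A2. rewrite (Rint_ext (F2 0) (fun z => 2 * Nz z)); [| apply cF2|].
  - rewrite Rint_scal, Int_N by apply cNz. field.
  - intros; unfold F2, g2. simpl. field; lra.
Qed.

Lemma dPhi_0 : 0 < dPhi 0.
Proof.
  unfold dPhi. rewrite A0_0, A1_0, A2_0. pose proof cc_pos.
  replace ((cc * (8 / 15) * (1 + cc * 0) - cc * 0 * (cc * 0)) / (1 + cc * 0) ^ 2) with (cc * (8/15)) by (simpl; field).
  lra.
Qed.

Lemma Phi_0 : Phi 0 = 0.
Proof. rewrite Phi_eq, A1_0. unfold Rdiv; ring. Qed.

Definition Hf r z := 2 * Nz z / (1 + bz z * r ^ 2) ^ 2.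
Definition Hf' r z := -8 * Nz z * bz z * r / (1 + bz z * r ^ 2) ^ 3.
Definition AH r := Rint (Hf r) 0 1.

Lemma cHf r : cont01 (Hf r).
Proof.
  intros z Hz.
  assert (H1 : 0 <= z^2 <= 1) by nra.
  assert (H3 : 0 <= (1 - z^2) * r^2) by (apply Rmult_le_pos; [lra| apply pow2_ge_0]).
  unfold Hf, Nz, bz. reg. apply pow_nonzero. intro; nra.
Qed.

Lemma A1_AH r : A1 r = r * AH r.
Proof.
  unfold A1, AH. rewrite <- Rint_scal by apply cHf.
  apply Rint_ext; [apply cF1|]. intros z Hz. unfold F1, g1, Hf.
  pose proof (Dpos (bz z) r ltac:(pose proof (bz_b z Hz); lra)). field. lra.
Qed.

Lemma AH_0 : AH 0 = 8 / 15.
Proof.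
  unfold AH. rewrite (Rint_ext (Hf 0) (fun z => 2 * Nz z)); [| apply cHf|].
  - rewrite Rint_scal, Int_N by apply cNz. field.
  - intros; unfold Hf. simpl. field.
Qed.

Lemma cAH : continuity_pt AH 0.
Proof.
  apply (Rint_cont Hf 0 4); [apply cHf| |lra].
  intros z Hz r Hr.
  apply (Lip_from_deriv (fun t => Hf t z) (fun t => Hf' t z) 0 1); auto.
  - intros t _. pose proof (bz_b z Hz). pose proof (Dpos (bz z) t ltac:(lra)).
    unfold Hf, Hf'. eapply dlim_l. dauto. nz. cbv beta. simpl. field. lra.
  - intros t Ht. pose proof (bz_b z Hz). pose proof (Nz_b z Hz).
    pose proof (Dpos (bz z) t ltac:(lra)). pose proof (pow2_ge_0 t).
    unfold Hf'. apply abs_div_le.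
    + replace (t - 0) with t in Ht by ring. apply Rabs_le_inv in Ht.
      assert (0 <= Nz z * bz z <= 1/4) by nra.
      apply Rabs_le; split; nra.
    + assert (1 <= 1 + bz z * t ^ 2) by nra.
      replace ((1 + bz z * t ^ 2) ^ 3) with ((1 + bz z * t ^ 2) * ((1 + bz z * t ^ 2) * (1 + bz z * t ^ 2))) by ring.
      nra.
Qed.

Lemma limit0 : limit1_in (fun r => Phi r / (2 * r / (15 * PI))) (fun r => 0 < r) 1 0.
Proof.
  set (k := fun r => 15 / 8 * AH r / (1 + cc * A0 r)).
  assert (Hk : continuity_pt k 0).
  { unfold k. pose proof cAH. pose proof (cA0 0). pose proof (den_pos 0). cauto; try assumption. cbv beta; lra. }
  assert (Hk0 : k 0 = 1).
  { unfold k. rewrite AH_0, A0_0. field. }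
  intros eps Heps. destruct (Hk eps Heps) as [alp [Halp H]].
  exists alp. split; auto. intros x [Hx Hd].
  rewrite <- Hk0. replace (Phi x / (2 * x / (15 * PI))) with (k x).
  - apply H. split; [split; [exact I| simpl in *; lra]| exact Hd].
  - unfold k. rewrite Phi_eq, A1_AH. unfold cc. pose proof PI_RGT_0. pose proof (den_pos x). unfold cc in H1. pose proof (A0_nonneg x).
    field. repeat split; lra.
Qed.

Lemma AH_pos r : 0 < AH r.
Proof.
  unfold AH. apply Rlt_le_trans with (Rint (fun z => (2 / (1 + r^2) ^ 2) * Nz z) 0 1).
  - rewrite Rint_scal, Int_N by apply cNz. pose proof (pow2_ge_0 r).
    assert (0 < (1 + r^2)^2) by (apply pow_lt; lra).
    apply Rmult_lt_0_compat; [|lra]. apply Rdiv_lt_0_compat; lra.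
  - apply Rint_le; [apply cont01_scal, cNz| apply cHf|].
    intros z Hz. unfold Hf. pose proof (bz_b z Hz). pose proof (Nz_b z Hz). pose proof (pow2_ge_0 r).
    assert (1 <= 1 + bz z * r^2 <= 1 + r^2) by nra.
    assert (1 <= (1 + bz z * r^2)^2 <= (1 + r^2)^2).
    { split; [nra|]. apply pow_incr. lra. }
    replace (2 / (1 + r ^ 2) ^ 2 * Nz z) with (Nz z * (2 * / (1 + r ^ 2) ^ 2)) by (unfold Rdiv; ring).
    replace (2 * Nz z / (1 + bz z * r ^ 2) ^ 2) with (Nz z * (2 * / (1 + bz z * r ^ 2) ^ 2)) by (unfold Rdiv; ring).
    apply Rmult_le_compat_l; [lra|]. apply Rmult_le_compat_l; [lra|].
    apply Rinv_le_contravar; lra.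
Qed.

Lemma Phi_pos r : 0 < r -> 0 < Phi r.
Proof.
  intro Hr. rewrite Phi_eq, A1_AH. pose proof (AH_pos r). pose proof cc_pos. pose proof (den_pos r).
  apply Rdiv_lt_0_compat; [|lra]. apply Rmult_lt_0_compat; [lra|]. apply Rmult_lt_0_compat; lra.
Qed.

Lemma d_sqrt f x l : derivable_pt_lim f x l -> 0 < f x ->
  derivable_pt_lim (fun y => sqrt (f y)) x (l / (2 * sqrt (f x))).
Proof.
  intros H H0. pose proof (derivable_pt_lim_comp f sqrt x l _ H (derivable_pt_lim_sqrt _ H0)) as X.
  unfold comp in X. eapply dlim_l; [exact X|]. unfold Rdiv. ring.
Qed.
Lemma d_ln f x l : derivable_pt_lim f x l -> 0 < f x ->
  derivable_pt_lim (fun y => ln (f y)) x (l / f x).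
Proof.
  intros H H0. pose proof (derivable_pt_lim_comp f ln x l _ H (derivable_pt_lim_ln _ H0)) as X.
  unfold comp in X. eapply dlim_l; [exact X|]. unfold Rdiv. ring.
Qed.

Ltac dauto2 :=
  match goal with
  | |- derivable_pt_lim (fun _ => ?c) _ _ => apply d_const
  | |- derivable_pt_lim (fun y => y) _ _ => apply d_id
  | |- derivable_pt_lim (fun y => @?f y + @?g y) _ _ => apply (d_plus f g); dauto2
  | |- derivable_pt_lim (fun y => @?f y - @?g y) _ _ => apply (d_minus f g); dauto2
  | |- derivable_pt_lim (fun y => @?f y * @?g y) _ _ => apply (d_mult f g); dauto2
  | |- derivable_pt_lim (fun y => - @?f y) _ _ => apply (d_opp f); dauto2
  | |- derivable_pt_lim (fun y => @?f y / @?g y) _ _ => apply (d_div f g); [dauto2|dauto2|]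
  | |- derivable_pt_lim (fun y => / @?f y) _ _ => apply (d_inv f); [dauto2|]
  | |- derivable_pt_lim (fun y => @?f y ^ ?n) _ _ => apply (d_pow f); dauto2
  | |- derivable_pt_lim (fun y => sqrt (@?f y)) _ _ => apply (d_sqrt f); [dauto2|]
  | |- derivable_pt_lim (fun y => ln (@?f y)) _ _ => apply (d_ln f); [dauto2|]
  | _ => idtac
  end.

Definition sq r := sqrt (4 + r ^ 2).
Definition Lg r := ln (r + sq r) - ln 2.
Definition Gc r := 4 / r ^ 2 - 5 / 3 + (2 * r ^ 2 - 4) * sq r * Lg r / r ^ 3.
Definition Gc1 r := 2 / r - 12 / r ^ 3 + 48 * Lg r / (r ^ 4 * sq r).
Definition Gc2 r := -2 / r ^ 2 + 36 / r ^ 4 + 48 / (r ^ 4 * sq r ^ 2)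
   - 48 * Lg r * (4 / (r ^ 5 * sq r) + 1 / (r ^ 3 * sq r ^ 3)).

Lemma sq_pos r : 0 < sq r.
Proof. unfold sq. apply sqrt_lt_R0. pose proof (pow2_ge_0 r). lra. Qed.
Lemma sq_sq r : sq r * sq r = 4 + r ^ 2.
Proof. unfold sq. apply sqrt_sqrt. pose proof (pow2_ge_0 r). lra. Qed.
Lemma sq_gt r : 0 <= r -> r < sq r.
Proof. intro. pose proof (sq_pos r). pose proof (sq_sq r). nra. Qed.

Lemma A0_closed r : 0 < r -> A0 r = 4 / 3 * Gc r.
Proof.
  intro Hr. pose proof (sq_pos r) as Hs0. pose proof (sq_sq r) as Hss. pose proof (sq_gt r ltac:(lra)) as Hsr.
  set (s := sq r) in *.
  set (kap := -2 * (4 + r ^ 2) * (4 - 2 * r ^ 2) / (3 * r ^ 3 * s)).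
  unfold A0.
  rewrite (Rint_FTC (F0 r) (fun z => 4 / 9 * z ^ 3 + (16 - 8 * r ^ 2) / (3 * r ^ 2) * z
            + kap * (ln (s + r * z) - ln (s - r * z)))).
  - assert (Hln : ln (s - r) = 2 * ln 2 - ln (s + r)).
    { assert (E4 : (s - r) * (s + r) = 2 * 2) by nra.
      assert (E5 : ln ((s - r) * (s + r)) = ln (2 * 2)) by (rewrite E4; reflexivity).
      rewrite ln_mult, ln_mult in E5 by lra. lra. }
    replace (r * 1) with r by ring. replace (r * 0) with 0 by ring.
    rewrite Rminus_0_r, Rplus_0_r, Hln.
    unfold Gc, Lg. fold s. rewrite (Rplus_comm r s).
    set (L := ln (s + r)). set (l2 := ln 2). unfold kap.
    field_simplify_eq; [| repeat split; lra].
    replace (s^2) with (4+r^2) by (rewrite <- Hss; ring). ring.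
  - apply cF0.
  - intros z Hz. eapply dlim_l; [dauto2| ].
    all: cbv beta.
    all: try nra.
    unfold F0, g0, Nz, bz, kap. simpl INR. simpl pred.
    assert (0 < s + r * z) by nra. assert (0 < s - r * z) by nra.
    assert (0 <= z ^ 2 <= 1) by nra. assert (0 <= (1 - z^2) * r^2) by (apply Rmult_le_pos; [lra| apply pow2_ge_0]).
    field_simplify_eq.
    + replace (s^3) with (s*(4+r^2)) by (rewrite <- Hss; ring). ring.
    + repeat split; intro; nra.
Qed.

Ltac spow s r Hss :=
  let E2 := fresh in let E3 := fresh in let E4 := fresh in let E5 := fresh in
  let E6 := fresh in let E7 := fresh in let E8 := fresh in
  assert (E2 : s ^ 2 = 4 + r ^ 2) by (rewrite <- Hss; ring);
  assert (E3 : s ^ 3 = s * (4 + r ^ 2)) by (rewrite <- Hss; ring);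
  assert (E4 : s ^ 4 = (4 + r ^ 2) ^ 2) by (rewrite <- Hss; ring);
  assert (E5 : s ^ 5 = s * (4 + r ^ 2) ^ 2) by (rewrite <- Hss; ring);
  assert (E6 : s ^ 6 = (4 + r ^ 2) ^ 3) by (rewrite <- Hss; ring);
  assert (E7 : s ^ 7 = s * (4 + r ^ 2) ^ 3) by (rewrite <- Hss; ring);
  assert (E8 : s ^ 8 = (4 + r ^ 2) ^ 4) by (rewrite <- Hss; ring);
  rewrite ?E8, ?E7, ?E6, ?E5, ?E4, ?E3, ?E2.

Lemma dGc r : 0 < r -> derivable_pt_lim Gc r (Gc1 r).
Proof.
  intro Hr. pose proof (sq_pos r) as Hs0. pose proof (sq_sq r) as Hss.
  pose proof (sq_gt r ltac:(lra)). pose proof (pow2_ge_0 r).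
  unfold Gc, Gc1, Lg, sq.
  eapply dlim_l; [dauto2|].
  all: cbv beta.
  all: fold (sq r) in *.
  all: try (apply pow_nonzero; lra).
  all: try lra.
  simpl INR. simpl pred. set (s := sq r) in *. set (L := ln (r + s) - ln 2).
  field_simplify_eq; [| repeat split; lra].
  spow s r Hss. ring.
Qed.

Lemma dGc1 r : 0 < r -> derivable_pt_lim Gc1 r (Gc2 r).
Proof.
  intro Hr. pose proof (sq_pos r) as Hs0. pose proof (sq_sq r) as Hss.
  pose proof (sq_gt r ltac:(lra)). pose proof (pow2_ge_0 r).
  unfold Gc1, Gc2, Lg, sq.
  eapply dlim_l; [dauto2|].
  all: cbv beta.
  all: fold (sq r) in *.
  all: try (apply pow_nonzero; lra).
  all: try lra.
  all: try (apply Rmult_integral_contrapositive; split; try apply pow_nonzero; lra).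
  simpl INR. simpl pred. set (s := sq r) in *. set (L := ln (r + s) - ln 2).
  field_simplify_eq; [| repeat split; lra].
  spow s r Hss. ring.
Qed.

Lemma deriv_local f g x l d : 0 < d -> (forall y, Rabs (y - x) < d -> f y = g y) ->
  derivable_pt_lim f x l -> derivable_pt_lim g x l.
Proof.
  intros Hd E H eps Heps. destruct (H eps Heps) as [del Hdel].
  assert (Hm : 0 < Rmin del d) by (apply Rmin_glb_lt; [apply cond_pos| lra]).
  exists (mkposreal _ Hm). intros h Hh0 Hh. simpl in Hh.
  pose proof (Rmin_l del d). pose proof (Rmin_r del d).
  rewrite <- (E (x + h)), <- (E x).
  - apply Hdel; auto. lra.
  - replace (x - x) with 0 by ring. rewrite Rabs_R0. lra.
  - replace (x + h - x) with h by ring. lra.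
Qed.

Lemma A1_closed r : 0 < r -> A1 r = 4 / 3 * Gc1 r.
Proof.
  intro Hr. eapply uniqueness_limite; [apply dA0|].
  apply (deriv_local (fun y => 4 / 3 * Gc y) A0 r _ r Hr).
  - intros y Hy. apply Rabs_lt_inv in Hy. rewrite A0_closed by lra. reflexivity.
  - eapply dlim_l. apply (d_mult (fun _ => 4/3) Gc). apply d_const. apply dGc; auto. ring.
Qed.

Lemma A2_closed r : 0 < r -> A2 r = 4 / 3 * Gc2 r.
Proof.
  intro Hr. eapply uniqueness_limite; [apply dA1|].
  apply (deriv_local (fun y => 4 / 3 * Gc1 y) A1 r _ r Hr).
  - intros y Hy. apply Rabs_lt_inv in Hy. rewrite A1_closed by lra. reflexivity.
  - eapply dlim_l. apply (d_mult (fun _ => 4/3) Gc1). apply d_const. apply dGc1; auto. ring.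
Qed.

Lemma ln_le' x y : 0 < x -> x <= y -> ln x <= ln y.
Proof. intros H1 [H2|H2]; [left; apply ln_increasing; auto| subst; lra]. Qed.

Lemma Lg_pos r : 0 < r -> 0 < Lg r.
Proof.
  intro Hr. unfold Lg. pose proof (sq_sq r). pose proof (sq_pos r). pose proof (pow_lt r 2 Hr).
  assert (4 < sq r * sq r) by lra.
  assert (2 < sq r) by nra.
  pose proof (ln_increasing 2 (r + sq r) ltac:(lra) ltac:(lra)). lra.
Qed.

Lemma Gc2_neg r : 5 <= r -> Gc2 r < 0.
Proof.
  intro Hr. pose proof (sq_sq r) as Hss. pose proof (sq_pos r). pose proof (Lg_pos r ltac:(lra)).
  set (s := sq r) in *. unfold Gc2. fold s.
  assert (0 <= 48 * Lg r * (4 / (r ^ 5 * s) + 1 / (r ^ 3 * s ^ 3))).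
  { apply Rmult_le_pos; [lra|].
    assert (0 < r ^ 5 * s) by (apply Rmult_lt_0_compat; [apply pow_lt|]; lra).
    assert (0 < r ^ 3 * s ^ 3) by (apply Rmult_lt_0_compat; apply pow_lt; lra).
    apply Rplus_le_le_0_compat; left; apply Rdiv_lt_0_compat; lra. }
  assert (-2 / r ^ 2 + 36 / r ^ 4 + 48 / (r ^ 4 * s ^ 2) < 0).
  { replace (s^2) with (4 + r^2) by (rewrite <- Hss; ring).
    assert (0 < r^2) by (apply pow_lt; lra).
    replace (-2 / r ^ 2 + 36 / r ^ 4 + 48 / (r ^ 4 * (4 + r ^ 2)))
      with ((-2 * r^2 * (4 + r^2) + 36 * (4 + r^2) + 48) / (r^4 * (4 + r^2))) by (field; lra).
    apply Rdiv_neg_pos.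
    - assert (25 <= r^2) by nra. assert (0 <= (r^2 - 25) * r^2) by (apply Rmult_le_pos; lra). nra.
    - apply Rmult_lt_0_compat; [apply pow_lt|]; lra. }
  lra.
Qed.

Lemma dPhi_neg r : 5 <= r -> dPhi r < 0.
Proof.
  intro Hr. unfold dPhi. rewrite (A2_closed r) by lra.
  pose proof (Gc2_neg r Hr). pose proof cc_pos. pose proof (den_pos r).
  apply Rdiv_neg_pos.
  - assert (cc * (4 / 3 * Gc2 r) < 0) by nra.
    assert (0 <= cc * A1 r * (cc * A1 r)) by nra. nra.
  - apply pow_lt; lra.
Qed.

Lemma div_le_l a b c : 0 < b -> a <= c * b -> a / b <= c.
Proof. intros Hb H. apply (Rmult_le_reg_r b); [lra|]. unfold Rdiv. rewrite Rmult_assoc, Rinv_l by lra. lra. Qed.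
Lemma div_ge_l a b c : 0 < b -> c * b <= a -> c <= a / b.
Proof. intros Hb H. apply (Rmult_le_reg_r b); [lra|]. unfold Rdiv. rewrite Rmult_assoc, Rinv_l by lra. lra. Qed.

Lemma Phi_closed r : 0 < r -> Phi r = Gc1 r / (3 * PI + Gc r).
Proof.
  intro Hr. pose proof (den_pos r). rewrite A0_closed in H by lra.
  rewrite Phi_eq, A1_closed by lra. unfold cc in *.
  pose proof PI_RGT_0.
  assert (0 < 3 * PI + Gc r).
  { replace (3 * PI + Gc r) with (3 * PI * (1 + / (4 * PI) * (4 / 3 * Gc r))) by (field; lra).
    apply Rmult_lt_0_compat; lra. }
  rewrite A0_closed by lra. field. split; lra.
Qed.

Lemma ln_lt_self x : 0 < x -> ln x < x.
Proof.
  intro Hx. pose proof (exp_ineq1 x ltac:(lra)).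
  pose proof (ln_increasing x (exp x) Hx ltac:(lra)). rewrite ln_exp in H0. exact H0.
Qed.

Lemma asym_bounds r : 3 <= r ->
  Rabs (r * Gc1 r - 2) <= 108 / r /\ Rabs (Gc r - 2 * ln r) <= 6.
Proof.
  intro Hr.
  pose proof (sq_sq r) as Hss. pose proof (sq_pos r). pose proof (sq_gt r ltac:(lra)).
  set (s := sq r) in *.
  set (l := ln r).
  assert (Hl0 : 0 < l) by (unfold l; rewrite <- ln_1; apply ln_increasing; lra).
  assert (Hl1 : l < r) by (apply ln_lt_self; lra).
  assert (Hs2 : s <= r + 2 / r).
  { assert (0 < r + 2 / r) by (pose proof (Rdiv_lt_0_compat 2 r ltac:(lra) ltac:(lra)); lra).
    assert (s * s <= (r + 2 / r) * (r + 2 / r)).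
    { replace ((r + 2 / r) * (r + 2 / r)) with (r * r + 4 + 4 / (r * r)) by (field; lra).
      pose proof (Rdiv_lt_0_compat 4 (r*r) ltac:(lra) ltac:(nra)). nra. }
    nra. }
  assert (Hs3 : s <= 2 * r) by nra.
  assert (HL : l <= Lg r <= l + 1).
  { unfold Lg. fold s. unfold l. split.
    - assert (ln (2 * r) <= ln (r + s)) by (apply ln_le'; lra).
      rewrite ln_mult in H1 by lra. lra.
    - pose proof exp_le_3.
      assert (ln (r + s) <= ln (exp 1 * 2 * r)).
      { apply ln_le'; [lra|]. pose proof (exp_ineq1 1 ltac:(lra)).
        assert (0 <= (exp 1 - 2) * r) by (apply Rmult_le_pos; lra).
        assert (exp 1 * 2 * r = 2 * ((exp 1 - 2) * r) + 4 * r) by ring. lra. }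
      pose proof (exp_pos 1). rewrite ln_mult, ln_mult, ln_exp in H2 by lra. lra. }
  set (L := Lg r) in *.
  split.
  - unfold Gc1. fold s L.
    replace (r * (2 / r - 12 / r ^ 3 + 48 * L / (r ^ 4 * s)) - 2)
      with (- (12 / r ^ 2) + 48 * L / (r ^ 3 * s)) by (field; lra).
    assert (0 < r ^ 2) by (apply pow_lt; lra).
    assert (0 < r ^ 3 * s) by (apply Rmult_lt_0_compat; [apply pow_lt|]; lra).
    assert (0 <= 12 / r ^ 2 <= 12 / r).
    { split. left; apply Rdiv_lt_0_compat; lra.
      apply div_le_l; [lra|]. unfold Rdiv. rewrite Rmult_assoc.
      replace (/ r * r ^ 2) with r by (field; lra). nra. }
    assert (0 <= 48 * L / (r ^ 3 * s) <= 96 / r).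
    { split. left; apply Rdiv_lt_0_compat; lra.
      apply div_le_l; [lra|]. unfold Rdiv. rewrite Rmult_assoc.
      replace (/ r * (r ^ 3 * s)) with (r^2 * s) by (field; lra).
      assert (9 <= r ^ 2) by nra. nra. }
    apply Rabs_le. split.
    + unfold Rdiv in *. lra.
    + unfold Rdiv in *. lra.
  - unfold Gc. fold s L.
    assert (0 < r ^ 3) by (apply pow_lt; lra).
    assert (0 <= 4 / r ^ 2 <= 1).
    { assert (0 < r ^ 2) by (apply pow_lt; lra). split. left; apply Rdiv_lt_0_compat; lra.
      apply div_le_l; [lra|]. nra. }
    assert (2 * l - 4 <= (2 * r ^ 2 - 4) * s * L / r ^ 3 <= 2 * l + 5).
    { assert (0 <= 2 * r ^ 2 - 4) by nra.
      split.
      - apply div_ge_l; [lra|].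
        assert ((2 * r ^ 2 - 4) * r * l <= (2 * r ^ 2 - 4) * s * L).
        { apply Rmult_le_compat; try nra. }
        assert (l <= r ^ 2) by nra. nra.
      - apply div_le_l; [lra|].
        assert ((2 * r ^ 2 - 4) * s * L <= 2 * r ^ 2 * (r + 2 / r) * (l + 1)).
        { apply Rmult_le_compat; try nra. }
        replace (2 * r ^ 2 * (r + 2 / r) * (l + 1)) with ((2 * r ^ 3 + 4 * r) * (l + 1)) in H4 by (field; lra).
        nra. }
    apply Rabs_le. split; lra.
Qed.

Lemma asym_inf : forall eps, 0 < eps -> exists M, forall r, M < r ->
  Rabs (Phi r * (r * ln r) - 1) < eps.
Proof.
  intros eps Heps.
  exists (Rmax 3 (exp (63 / eps + 3))). intros r Hr.
  pose proof (Rmax_l 3 (exp (63 / eps + 3))). pose proof (Rmax_r 3 (exp (63 / eps + 3))).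
  assert (Hl : 63 / eps + 3 < ln r).
  { rewrite <- (ln_exp (63 / eps + 3)). apply ln_increasing; [apply exp_pos| lra]. }
  destruct (asym_bounds r ltac:(lra)) as [B1 B2].
  apply Rabs_le_inv in B1. apply Rabs_le_inv in B2.
  pose proof PI_RGT_0. pose proof PI_4.
  assert (Hl1 : ln r < r) by (apply ln_lt_self; lra).
  assert (He : 0 < 63 / eps) by (apply Rdiv_lt_0_compat; lra).
  rewrite Phi_closed by lra.
  set (l := ln r) in *. set (e1 := r * Gc1 r - 2). set (e2 := Gc r - 2 * l).
  assert (Hden : 126 / eps < 3 * PI + Gc r).
  { replace (126 / eps) with (2 * (63 / eps)) by (field; lra). unfold e2 in B2. lra. }
  assert (Hdp : 0 < 3 * PI + Gc r) by (pose proof (Rdiv_lt_0_compat 126 eps ltac:(lra) Heps); lra).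
  replace (Gc1 r / (3 * PI + Gc r) * (r * l) - 1) with ((e1 * l - 3 * PI - e2) / (3 * PI + Gc r))
    by (unfold e1, e2; field; lra).
  assert (Hnum : Rabs (e1 * l - 3 * PI - e2) <= 126).
  { assert (Rabs (e1 * l) <= 108).
    { rewrite Rabs_mult, (Rabs_right l) by lra.
      assert (Rabs e1 <= 108 / r) by (apply Rabs_le; unfold e1; lra).
      apply Rle_trans with (108 / r * l).
      - apply Rmult_le_compat_r; lra.
      - replace (108 / r * l) with (108 * l / r) by (field; lra).
        apply div_le_l; [lra|]. lra. }
    pose proof (Rabs_triang (e1 * l) (- 3 * PI - e2)).
    replace (e1 * l + (- 3 * PI - e2)) with (e1 * l - 3 * PI - e2) in H4 by ring.
    assert (Rabs (- 3 * PI - e2) <= 3 * PI + 6) by (apply Rabs_le; unfold e2; lra).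
    lra. }
  unfold Rdiv. rewrite Rabs_mult, Rabs_inv, (Rabs_right (3 * PI + Gc r)) by lra.
  apply Rle_lt_trans with (126 * / (3 * PI + Gc r)).
  - apply Rmult_le_compat_r; [left; apply Rinv_0_lt_compat; lra| lra].
  - apply (Rmult_lt_reg_r (3 * PI + Gc r)); [lra|].
    rewrite Rmult_assoc, Rinv_l by lra.
    unfold Rdiv in Hden.
    assert (126 = eps * (126 * / eps)) by (field; lra). nra.
Qed.

Lemma incr_on f f' a b :
  (forall x, a <= x <= b -> derivable_pt_lim f x (f' x) /\ 0 < f' x) ->
  forall x y, a <= x -> x < y -> y <= b -> f x < f y.
Proof.
  intros H x y Hx Hxy Hy.
  destruct (MVT_cor2 f f' x y Hxy) as [c [Hc Hc2]].
  - intros c Hc. apply H. lra.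
  - assert (0 < f' c) by (apply H; lra). nra.
Qed.

Lemma decr_from f f' a :
  (forall x, a <= x -> derivable_pt_lim f x (f' x) /\ f' x < 0) ->
  forall x y, a <= x -> x < y -> f y < f x.
Proof.
  intros H x y Hx Hxy.
  destruct (MVT_cor2 f f' x y Hxy) as [c [Hc Hc2]].
  - intros c Hc. apply H. lra.
  - assert (f' c < 0) by (apply H; lra). nra.
Qed.

Lemma inv_deriv f g y l :
  continuity_pt g y ->
  (exists e, 0 < e /\ forall y', Rabs (y' - y) < e -> f (g y') = y') ->
  derivable_pt_lim f (g y) l -> l <> 0 ->
  derivable_pt_lim g y (1 / l).
Proof.
  intros Hc [e [He Hfg]] Hd Hl eps Heps.
  assert (Hal : 0 < Rabs l) by (apply Rabs_pos_lt; auto).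
  set (eta := Rmin (Rabs l / 2) (eps * (Rabs l) ^ 2 / 2)).
  assert (Heta : 0 < eta).
  { unfold eta. apply Rmin_glb_lt; [lra|]. pose proof (pow_lt _ 2 Hal). nra. }
  destruct (Hd eta Heta) as [d1 Hd1].
  destruct (Hc d1 (cond_pos d1)) as [d2 [Hd2 Hg]].
  assert (Hm : 0 < Rmin d2 e) by (apply Rmin_glb_lt; lra).
  exists (mkposreal _ Hm). intros h Hh0 Hh. simpl in Hh.
  pose proof (Rmin_l d2 e). pose proof (Rmin_r d2 e).
  set (k := g (y + h) - g y).
  assert (Hfy : f (g y) = y) by (apply Hfg; rewrite Rminus_diag, Rabs_R0; lra).
  assert (Hfyh : f (g y + k) = y + h).
  { unfold k. replace (g y + (g (y + h) - g y)) with (g (y + h)) by ring. apply Hfg.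
    replace (y + h - y) with h by ring. lra. }
  assert (Hk0 : k <> 0).
  { intro Hk. rewrite Hk, Rplus_0_r, Hfy in Hfyh. lra. }
  assert (Hk : Rabs k < d1).
  { destruct (Req_dec h 0) as [|_]; [contradiction|].
    assert (Hgy : D_x no_cond y (y + h) /\ Rdist (y + h) y < d2).
    { split. split; [exact I| lra]. unfold Rdist. replace (y + h - y) with h by ring. lra. }
    specialize (Hg (y + h) Hgy). simpl in Hg. unfold Rdist in Hg. exact Hg. }
  specialize (Hd1 k Hk0 Hk).
  rewrite Hfyh, Hfy in Hd1.
  replace (y + h - y) with h in Hd1 by ring.
  set (w := h / k) in *.
  assert (Hw : Rabs (w - l) < eta) by exact Hd1.
  assert (Hwl : Rabs l / 2 < Rabs w).
  { pose proof (Rabs_triang_inv l w). rewrite Rabs_minus_sym in Hw.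
    pose proof (Rmin_l (Rabs l / 2) (eps * Rabs l ^ 2 / 2)) as Hml. fold eta in Hml. lra. }
  assert (Hw0 : w <> 0) by (intro Hw0; rewrite Hw0, Rabs_R0 in Hwl; lra).
  replace (k / h - 1 / l) with ((l - w) / (w * l)).
  2:{ unfold w. field. repeat split; auto. }
  unfold Rdiv. rewrite Rabs_mult, Rabs_inv, Rabs_mult.
  rewrite Rabs_minus_sym.
  assert (0 < Rabs w * Rabs l) by nra.
  apply (Rmult_lt_reg_r (Rabs w * Rabs l)); [lra|].
  rewrite Rmult_assoc, Rinv_l by lra. rewrite Rmult_1_r.
  apply Rlt_le_trans with eta; [exact Hw|].
  pose proof (Rmin_r (Rabs l / 2) (eps * Rabs l ^ 2 / 2)) as Hmr. fold eta in Hmr.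
  apply Rle_trans with (eps * Rabs l ^ 2 / 2); [exact Hmr|].
  simpl. nra.
Qed.

Lemma inv_cont_incr f g (I J : R -> Prop) y :
  (forall x1 x2, I x1 -> I x2 -> x1 < x2 -> f x1 < f x2) ->
  (forall y, J y -> I (g y) /\ f (g y) = y) ->
  (forall x, I x -> exists e, 0 < e /\ forall x', Rabs (x' - x) < e -> I x') ->
  (exists e, 0 < e /\ forall y', Rabs (y' - y) < e -> J y') ->
  J y -> continuity_pt g y.
Proof.
  intros Hm HgI HoI [eJ [HeJ HJ]] Hy eps Heps.
  destruct (HgI y Hy) as [Ix0 Hfx0]. set (x0 := g y) in *.
  destruct (HoI x0 Ix0) as [e0 [He0 HI0]].
  set (e1 := Rmin eps e0 / 2).
  assert (He1 : 0 < e1) by (unfold e1; pose proof (Rmin_glb_lt eps e0 0 Heps He0); lra).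
  assert (He1' : e1 < eps /\ e1 < e0).
  { unfold e1. pose proof (Rmin_l eps e0). pose proof (Rmin_r eps e0). lra. }
  assert (I1 : I (x0 - e1)) by (apply HI0; replace (x0 - e1 - x0) with (- e1) by ring; rewrite Rabs_Ropp, Rabs_right; lra).
  assert (I2 : I (x0 + e1)) by (apply HI0; replace (x0 + e1 - x0) with e1 by ring; rewrite Rabs_right; lra).
  assert (F1 : f (x0 - e1) < y) by (rewrite <- Hfx0; apply Hm; auto; lra).
  assert (F2 : y < f (x0 + e1)) by (rewrite <- Hfx0; apply Hm; auto; lra).
  exists (Rmin eJ (Rmin (y - f (x0 - e1)) (f (x0 + e1) - y))).
  split.
  { apply Rmin_glb_lt; [lra|]. apply Rmin_glb_lt; lra. }
  intros y' [_ Hy']. simpl in *. unfold Rdist in *.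
  pose proof (Rmin_l eJ (Rmin (y - f (x0 - e1)) (f (x0 + e1) - y))).
  pose proof (Rmin_r eJ (Rmin (y - f (x0 - e1)) (f (x0 + e1) - y))).
  pose proof (Rmin_l (y - f (x0 - e1)) (f (x0 + e1) - y)).
  pose proof (Rmin_r (y - f (x0 - e1)) (f (x0 + e1) - y)).
  assert (Jy' : J y') by (apply HJ; lra).
  destruct (HgI y' Jy') as [Ix' Hfx'].
  apply Rabs_lt_inv in Hy'.
  assert (g y' > x0 - e1).
  { destruct (Rle_lt_dec (g y') (x0 - e1)) as [Hle|]; [|lra].
    destruct Hle as [Hlt|Heq].
    - pose proof (Hm _ _ Ix' I1 Hlt). lra.
    - rewrite Heq in Hfx'. lra. }
  assert (g y' < x0 + e1).
  { destruct (Rle_lt_dec (x0 + e1) (g y')) as [Hle|]; [|lra].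
    destruct Hle as [Hlt|Heq].
    - pose proof (Hm _ _ I2 Ix' Hlt). lra.
    - rewrite <- Heq in Hfx'. lra. }
  apply Rabs_def1; lra.
Qed.

Lemma diffeo_of f f' (I J : R -> Prop) :
  (forall x, I x -> derivable_pt_lim f x (f' x) /\ continuity_pt f' x) ->
  (forall x, I x -> f' x <> 0) ->
  (forall x1 x2, I x1 -> I x2 -> f x1 = f x2 -> x1 = x2) ->
  (forall x, I x -> J (f x)) ->
  (forall y, J y -> exists x, I x /\ f x = y) ->
  (forall y, J y -> exists e, 0 < e /\ forall y', Rabs (y' - y) < e -> J y') ->
  (forall g, (forall y, J y -> I (g y) /\ f (g y) = y) -> forall y, J y -> continuity_pt g y) ->
  diffeo_onto I J f.
Proof.
  intros Hd Hnz Hinj Hinto Hsurj HoJ Hcont.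
  set (g := fun y => epsilon (inhabits 0) (fun x => I x /\ f x = y)).
  assert (HgI : forall y, J y -> I (g y) /\ f (g y) = y).
  { intros y Hy. unfold g. apply (epsilon_spec (inhabits 0) (fun x => I x /\ f x = y)). apply Hsurj, Hy. }
  exists g. split; [|split; [|split]].
  - intros x Hx. split; [apply Hinto; auto|].
    destruct (HgI (f x) (Hinto x Hx)) as [H1 H2]. apply Hinj; auto.
  - exact HgI.
  - exists f'. exact Hd.
  - exists (fun y => 1 / f' (g y)). intros y Hy.
    pose proof (Hcont g HgI y Hy) as Hgc.
    destruct (HgI y Hy) as [Igy Hfgy].
    split.
    + apply (inv_deriv f g y (f' (g y))).
      * exact Hgc.
      * destruct (HoJ y Hy) as [e [He HJ]]. exists e. split; auto.
        intros y' Hy'. apply HgI, HJ, Hy'.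
      * apply Hd, Igy.
      * apply Hnz, Igy.
    + apply (c_div (fun _ => 1) (fun y => f' (g y))).
      * apply c_const.
      * apply c_comp; [exact Hgc| apply Hd, Igy].
      * apply Hnz, Igy.
Qed.

Lemma Phi_small y T : 0 < y -> exists R, T < R /\ Phi R < y.
Proof.
  intro Hy. destruct (asym_inf 1 Rlt_0_1) as [M HM].
  set (R := Rmax (Rmax (M + 1) (T + 1)) (Rmax (exp 1 + 1) (2 / y + 1))).
  pose proof (Rmax_l (Rmax (M + 1) (T + 1)) (Rmax (exp 1 + 1) (2 / y + 1))).
  pose proof (Rmax_r (Rmax (M + 1) (T + 1)) (Rmax (exp 1 + 1) (2 / y + 1))).
  pose proof (Rmax_l (M + 1) (T + 1)). pose proof (Rmax_r (M + 1) (T + 1)).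
  pose proof (Rmax_l (exp 1 + 1) (2 / y + 1)). pose proof (Rmax_r (exp 1 + 1) (2 / y + 1)).
  fold R in H, H0. pose proof (exp_pos 1). pose proof (Rdiv_lt_0_compat 2 y ltac:(lra) Hy).
  exists R. split; [lra|].
  assert (HR : 0 < R) by lra.
  assert (Hl : 1 < ln R).
  { rewrite <- (ln_exp 1). apply ln_increasing; lra. }
  pose proof (Phi_pos R HR).
  specialize (HM R ltac:(lra)). apply Rabs_lt_inv in HM.
  assert (Phi R * R < 2).
  { assert (0 < Phi R * R) by nra.
    assert (Phi R * R < Phi R * R * ln R) by nra. nra. }
  assert (2 < y * R).
  { assert (H2y : 2 / y < R) by lra. apply (Rmult_lt_compat_l y) in H2y; [|lra].
    replace (y * (2 / y)) with 2 in H2y by (field; lra). lra. }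
  nra.
Qed.

Theorem lemma9 :
  exists Tm Tp Phi0 : R,
    0 < Tm /\ Tm < Tp /\ 0 < Phi0 /\
    strictly_increasing_on (fun r => 0 < r < Tm) Phi /\
    diffeo_onto (fun r => 0 < r < Tm) (fun y => 0 < y < Phi0) Phi /\
    strictly_decreasing_on (fun r => Tp < r) Phi /\
    diffeo_onto (fun r => Tp < r) (fun y => 0 < y < Phi0) Phi /\
    (forall r, 0 <= r -> (0 < Phi r < Phi0 <-> (0 < r < Tm \/ Tp < r))) /\
    limit1_in (fun r => Phi r / (2 * r / (15 * PI))) (fun r => 0 < r) 1 0 /\
    (forall eps, 0 < eps -> exists M, forall r, M < r ->
        Rabs (Phi r * (r * ln r) - 1) < eps).
Proof.
  pose proof dPhi_0 as HdP0.
  destruct (cdPhi 0 (dPhi 0 / 2) ltac:(lra)) as [del [Hdel Hc]].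
  set (a := Rmin (del / 2) 1).
  assert (Ha : 0 < a /\ a <= 1 /\ a < del).
  { unfold a. pose proof (Rmin_l (del/2) 1). pose proof (Rmin_r (del/2) 1).
    pose proof (Rmin_glb_lt (del/2) 1 0 ltac:(lra) ltac:(lra)). lra. }
  assert (Hpos : forall x, 0 <= x <= a -> derivable_pt_lim Phi x (dPhi x) /\ 0 < dPhi x).
  { intros x Hx. split; [apply dPhi_lim|].
    destruct (Req_dec x 0) as [->|Hx0]; [lra|].
    assert (Hd : D_x no_cond 0 x /\ dist R_met x 0 < del).
    { split. split; [exact I| auto]. simpl. unfold Rdist. rewrite Rminus_0_r, Rabs_right; lra. }
    specialize (Hc x Hd). simpl in Hc. unfold Rdist in Hc. apply Rabs_lt_inv in Hc. lra. }
  assert (Hinc : forall x y, 0 <= x -> x < y -> y <= a -> Phi x < Phi y)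
    by (apply (incr_on Phi dPhi 0 a Hpos)).
  assert (Hdec : forall x y, 5 <= x -> x < y -> Phi y < Phi x).
  { apply (decr_from Phi dPhi 5). intros x Hx. split; [apply dPhi_lim| apply dPhi_neg; auto]. }
  assert (HcP : forall k, continuity (fun r => Phi r - k)).
  { intros k x. apply (c_minus Phi (fun _ => k)); [apply cPhi| apply c_const]. }
  destruct (continuity_ab_min Phi a 5 ltac:(lra) (fun c _ => cPhi c)) as [mx [Hmx Hmxr]].
  set (m := Phi mx).
  assert (Hm : 0 < m) by (apply Phi_pos; lra).
  pose proof Phi_0 as HP0.
  assert (Hma : m <= Phi a) by (apply Hmx; lra).
  destruct (IVT_cor (fun r => Phi r - m) 0 a (HcP m) ltac:(lra)) as [Tm [HTm HTm2]].
  { cbv beta. rewrite HP0. nra. }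
  cbv beta in HTm2. assert (HTmE : Phi Tm = m) by lra.
  assert (HTm0 : 0 < Tm).
  { destruct (Req_dec Tm 0) as [E|]; [rewrite E, HP0 in HTmE; lra| lra]. }
  destruct (Phi_small m 5 Hm) as [R0 [HR0 HR0m]].
  assert (Hm5 : m <= Phi 5) by (apply Hmx; lra).
  destruct (IVT_cor (fun r => Phi r - m) 5 R0 (HcP m) ltac:(lra)) as [Tp [HTp HTp2]].
  { cbv beta. nra. }
  cbv beta in HTp2. assert (HTpE : Phi Tp = m) by lra.
  assert (IncI : forall x y, 0 < x < Tm -> 0 < y < Tm -> x < y -> Phi x < Phi y).
  { intros x y Hx Hy Hxy. apply Hinc; lra. }
  assert (DecI : forall x y, Tp < x -> Tp < y -> x < y -> Phi y < Phi x).
  { intros x y Hx Hy Hxy. apply Hdec; lra. }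
  assert (HoJ : forall y, 0 < y < m -> exists e, 0 < e /\ forall y', Rabs (y' - y) < e -> 0 < y' < m).
  { intros y Hy. exists (Rmin y (m - y)). split; [apply Rmin_glb_lt; lra|].
    intros y' Hy'. apply Rabs_lt_inv in Hy'.
    pose proof (Rmin_l y (m - y)). pose proof (Rmin_r y (m - y)). lra. }
  exists Tm, Tp, m.
  split; [lra|]. split; [lra|]. split; [lra|].
  split; [exact IncI|].
  split.
  {
    apply (diffeo_of Phi dPhi).
    - intros x Hx. split; [apply dPhi_lim| apply cdPhi].
    - intros x Hx. assert (0 < dPhi x) by (apply Hpos; lra). lra.
    - intros x1 x2 H1 H2 E. destruct (total_order_T x1 x2) as [[Hl|He]|Hg]; auto.
      + pose proof (IncI _ _ H1 H2 Hl). lra.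
      + pose proof (IncI _ _ H2 H1 Hg). lra.
    - intros x Hx. split; [apply Phi_pos; lra|]. rewrite <- HTmE. apply Hinc; lra.
    - intros y Hy.
      destruct (IVT_cor (fun r => Phi r - y) 0 Tm (HcP y) ltac:(lra)) as [z [Hz Hz2]].
      { cbv beta. rewrite HP0, HTmE. nra. }
      cbv beta in Hz2. exists z. split; [|lra].
      split.
      + destruct (Req_dec z 0) as [E|]; [rewrite E, HP0 in Hz2; lra| lra].
      + destruct (Req_dec z Tm) as [E|]; [rewrite E, HTmE in Hz2; lra| lra].
    - exact HoJ.
    - intros g HgI y Hy. apply (inv_cont_incr Phi g (fun r => 0 < r < Tm) (fun y => 0 < y < m)); auto.
      intros x Hx. exists (Rmin x (Tm - x)). split; [apply Rmin_glb_lt; lra|].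
      intros x' Hx'. apply Rabs_lt_inv in Hx'.
      pose proof (Rmin_l x (Tm - x)). pose proof (Rmin_r x (Tm - x)). lra. }
  split; [exact DecI|].
  split.
  {
    apply (diffeo_of Phi dPhi).
    - intros x Hx. split; [apply dPhi_lim| apply cdPhi].
    - intros x Hx. assert (dPhi x < 0) by (apply dPhi_neg; lra). lra.
    - intros x1 x2 H1 H2 E. destruct (total_order_T x1 x2) as [[Hl|He]|Hg]; auto.
      + pose proof (DecI _ _ H1 H2 Hl). lra.
      + pose proof (DecI _ _ H2 H1 Hg). lra.
    - intros x Hx. split; [apply Phi_pos; lra|]. rewrite <- HTpE. apply Hdec; lra.
    - intros y Hy.
      destruct (Phi_small y Tp ltac:(lra)) as [R1 [HR1 HR1y]].
      destruct (IVT_cor (fun r => Phi r - y) Tp R1 (HcP y) ltac:(lra)) as [z [Hz Hz2]].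
      { cbv beta. rewrite HTpE. nra. }
      cbv beta in Hz2. exists z. split; [|lra].
      destruct (Req_dec z Tp) as [E|]; [rewrite E, HTpE in Hz2; lra| lra].
    - exact HoJ.
    - intros g HgI y Hy.
      assert (Hc2 : continuity_pt (fun y => g (- y)) (- y)).
      { apply (inv_cont_incr (fun x => - Phi x) (fun y => g (- y)) (fun r => Tp < r) (fun y => 0 < - y < m)).
        - intros x1 x2 H1 H2 H12. pose proof (DecI _ _ H1 H2 H12). lra.
        - intros y' Hy'. destruct (HgI (- y') Hy') as [A B]. split; auto. rewrite B. ring.
        - intros x Hx. exists (x - Tp). split; [lra|]. intros x' Hx'. apply Rabs_lt_inv in Hx'. lra.
        - destruct (HoJ y Hy) as [e [He HJ]]. exists e. split; auto.
          intros y' Hy'. apply HJ. replace (- y' - y) with (- (y' - - y)) by ring.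
          rewrite Rabs_Ropp. exact Hy'.
        - lra. }
      assert (Hg : g = fun y => (fun y => g (- y)) (- y)).
      { apply functional_extensionality. intro x. rewrite Ropp_involutive. reflexivity. }
      rewrite Hg. apply (c_comp (fun y => - y) (fun y => g (- y))).
      + apply (continuity_pt_opp (fun y => y)). apply c_id.
      + exact Hc2. }
  split.
  { intros r Hr. split.
    - intros [H1 H2].
      destruct (Req_dec r 0) as [E|Hr0]; [rewrite E, HP0 in H1; lra|].
      destruct (Rlt_le_dec r Tm) as [Hl|Hl]; [left; lra|].
      destruct (Rlt_le_dec Tp r) as [Hg|Hg]; [right; lra|].
      exfalso.
      destruct (Rle_lt_dec r a) as [Hra|Hra].
      + destruct (Req_dec r Tm) as [E|Hne]; [rewrite E in H2; lra|].
        pose proof (Hinc Tm r ltac:(lra) ltac:(lra) Hra). lra.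
      + destruct (Rle_lt_dec r 5) as [Hr5|Hr5].
        * pose proof (Hmx r ltac:(lra)). fold m in H. lra.
        * destruct (Req_dec r Tp) as [E|Hne]; [rewrite E in H2; lra|].
          pose proof (Hdec r Tp ltac:(lra) ltac:(lra)). lra.
    - intros [H1|H1].
      + split; [apply Phi_pos; lra|]. rewrite <- HTmE. apply Hinc; lra.
      + split; [apply Phi_pos; lra|]. rewrite <- HTpE. apply Hdec; lra. }
  split; [exact limit0| exact asym_inf].
Qed.
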